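(* Consider one execution of the Modified NCB algorithm with inputs $k$ and $W$, where $\sqrt T\le W\le T$, and assume $968kS\le T$. On the event $E$, no arm $j$ with $\mu_j\le\frac{\mu^*}{64}$ is pulled in any round of Phase 2.
   Context: Bandit setup: $k$ arms, arm $i$ a distribution on $[0,1]$ with mean $\mu_i$, $\mu^*:=\max_i\mu_i>0$. $\log$ is the natural logarithm; $c:=3$; $T$ is the overall horizon and $S:=\frac{c^2\log T}{\mu^*}$. Modified NCB algorithm (inputs $k$, window $W$): maintain counts $n_i$ and empirical means $\widehat\mu_i$ (both initially $0$), round index $t=1$. Phase 1: while $\max_i n_i\widehat\mu_i\le 420c^2\log W$ and $t\le W$, pull a uniformly random arm, update, increment $t$. Phase 2: while $t\le W$, pull an arm maximizing $\overline{\mathrm{NCB}}_i:=\widehat\mu_i+2c\sqrt{2\widehat\mu_i\log W/n_i}$ (ties arbitrary), update, increment $t$. Canonical model: a $k\times T$ table $(Y_{i,s})$ of independent entries with $Y_{i,s}$ distributed as arm $i$, the $s$-th pull of arm $i$ yielding $Y_{i,s}$; $\widehat\mu_{i,s}:=\frac1s\sum_{r=1}^sY_{i,r}$. The uniform choices in Phase 1 are $U_1,U_2,\dots$, independent uniform in $[k]$ (independent of the table). Events: $E_1$: for every integer $r$ with $128kS\le r\le T$ and every arm $i$, the number of $r'\le r$ with $U_{r'}=i$ is at least $\frac{r}{2k}$ and at most $\frac{3r}{2k}$. $E_2$: for every arm $i$ with $\mu_i>\frac{\mu^*}{64}$ and every integer $s$ with $64S\le s\le T$, $|\mu_i-\widehat\mu_{i,s}|\le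 c\sqrt{\frac{\mu_i\log T}{s}}$. $E_3$: for every arm $j$ with $\mu_j\le\frac{\mu^*}{64}$ and every integer $s$ with $64S\le s\le T$, $\widehat\mu_{j,s}<\frac{\mu^*}{32}$. $E:=E_1\cap E_2\cap E_3$. *)

(* Defs.v *)
From HB Require Import structures.
From mathcomp Require Import all_boot all_order all_algebra.
From mathcomp Require Import all_classical all_reals all_analysis.
Set Implicit Arguments. Unset Strict Implicit. Unset Printing Implicit Defensive.
Import Order.TTheory GRing.Theory Num.Theory.
Local Open Scope ring_scope.

Section NCB.
Variables (R : realType) (k : nat).

Definition cst : R := 3.

(* mu^* = max_i mu_i (means are nonnegative, so 0 is a neutral element). *)
Definition mustar (mu : 'I_k -> R) : R := \big[Num.max/0]_(i < k) mu i.

Definition Spar (mu : 'I_k -> R) (T : nat) : R := cst ^+ 2 * ln (T%:R) / mustar mu.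

(* Canonical model: Y i s is the s-th pull (s >= 1) of arm i.
   Sum of the first n pulls of arm i, and empirical mean (0 when n = 0). *)
Definition sumY (Y : 'I_k -> nat -> R) (i : 'I_k) (n : nat) : R :=
  \sum_(1 <= s < n.+1) Y i s.
Definition muhat (Y : 'I_k -> nat -> R) (i : 'I_k) (n : nat) : R :=
  sumY Y i n / n%:R.

(* Number of rounds t' in [1, t] in which arm i was pulled, for a pull
   sequence a (a t = arm pulled in round t, t >= 1). *)
Definition cnt (a : nat -> 'I_k) (i : 'I_k) (t : nat) : nat :=
  \sum_(1 <= t' < t.+1) (a t' == i).

Definition cntU (U : nat -> 'I_k) (i : 'I_k) (r : nat) : nat :=
  \sum_(1 <= r' < r.+1) (U r' == i).

(* Phase-1 loop test before round t: max_i n_i muhat_i <= 420 c^2 log W,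
   with n_i, muhat_i the values after rounds 1..t-1. *)
Definition cond1 (Y : 'I_k -> nat -> R) (W : nat) (a : nat -> 'I_k) (t : nat) : Prop :=
  forall i : 'I_k, sumY Y i (cnt a i t.-1) <= 420 * cst ^+ 2 * ln (W%:R).

(* Round t belongs to Phase 1 iff the loop test succeeded before every round
   1..t (the while loop is never re-entered once it exits). *)
Definition phase1 (Y : 'I_k -> nat -> R) (W : nat) (a : nat -> 'I_k) (t : nat) : Prop :=
  forall t', (1 <= t')%N -> (t' <= t)%N -> cond1 Y W a t'.

Definition ncb (Y : 'I_k -> nat -> R) (W : nat) (a : nat -> 'I_k) (i : 'I_k) (t : nat) : R :=
  let n := cnt a i t.-1 in
  muhat Y i n + 2 * cst * Num.sqrt (2 * muhat Y i n * ln (W%:R) / n%:R).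

(* a is an execution of Modified NCB (inputs k, W) on table Y with uniform
   choices U, with arbitrary tie-breaking in Phase 2. *)
Definition is_execution (Y : 'I_k -> nat -> R) (U : nat -> 'I_k) (W : nat)
    (a : nat -> 'I_k) : Prop :=
  forall t, (1 <= t)%N -> (t <= W)%N ->
    (phase1 Y W a t -> a t = U t) /\
    (~ phase1 Y W a t -> forall i : 'I_k, ncb Y W a i t <= ncb Y W a (a t) t).

Definition E1 (mu : 'I_k -> R) (T : nat) (U : nat -> 'I_k) : Prop :=
  forall r : nat, 128 * k%:R * Spar mu T <= r%:R -> (r <= T)%N ->
    forall i : 'I_k, r%:R / (2 * k%:R) <= (cntU U i r)%:R :> R /\
                     (cntU U i r)%:R <= 3 * r%:R / (2 * k%:R) :> R.

Definition E2 (mu : 'I_k -> R) (T : nat) (Y : 'I_k -> nat -> R) : Prop :=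
  forall i : 'I_k, mustar mu / 64 < mu i ->
    forall s : nat, (1 <= s)%N -> 64 * Spar mu T <= s%:R -> (s <= T)%N ->
      `|mu i - muhat Y i s| <= cst * Num.sqrt (mu i * ln (T%:R) / s%:R).

Definition E3 (mu : 'I_k -> R) (T : nat) (Y : 'I_k -> nat -> R) : Prop :=
  forall j : 'I_k, mu j <= mustar mu / 64 ->
    forall s : nat, (1 <= s)%N -> 64 * Spar mu T <= s%:R -> (s <= T)%N ->
      muhat Y j s < mustar mu / 32.

Definition Ev mu T U Y : Prop := [/\ E1 mu T U, E2 mu T Y & E3 mu T Y].

End NCB.

(* Main.v *)
Require Import Defs.
From HB Require Import structures.
From mathcomp Require Import all_boot all_order all_algebra.
From mathcomp Require Import all_classical all_reals all_analysis.
Import Order.TTheory GRing.Theory Num.Theory.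
Local Open Scope ring_scope.
From mathcomp Require Import ring lra.
From Stdlib Require Import Classical Lia.
From mathcomp Require Import zify.
Set Implicit Arguments. Unset Strict Implicit. Unset Printing Implicit Defensive.
Lemma sqrt_le_of (R : realType) (x y : R) : 0 <= y -> x <= y ^+ 2 -> Num.sqrt x <= y.
Proof.
move=> hy hx; rewrite -(ger0_norm hy) -sqrtr_sqr; exact: ler_wsqrtr.
Qed.

Lemma numA (R : realType) (M L m S s q h : R) :
  0 < M -> M <= 1 -> 1/2 <= L -> 0 <= m -> m <= M -> S * M = 9 * L ->
  0 < s -> s <= 192 * S + 3/2 -> 0 <= q -> q ^+ 2 * s = m * L -> h <= m + 3 * q ->
  s * h < 1890 * L.
Proof.
move=> M0 M1 L2 m0 mM SM s0 sS q0 qs hq.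
have h1 : s * M <= 1731 * L.
  have : s * M <= (192 * S + 3/2) * M by rewrite ler_wpM2r // ltW.
  nra.
have h2 : s * m <= 1731 * L by apply: le_trans h1; rewrite ler_wpM2l // ltW.
have h3 : (s * q) ^+ 2 <= (42 * L) ^+ 2.
  have -> : (s * q) ^+ 2 = s * (q ^+ 2 * s) by rewrite exprMn expr2; ring.
  rewrite qs; nra.
have h4 : s * q <= 42 * L.
  rewrite -ler_sqr ?nnegrE //; [nra|nra].
have : s * h <= s * (m + 3 * q) by rewrite ler_wpM2l // ltW.
nra.
Qed.

Lemma numB (R : realType) (M L S s h : R) :
  0 < M -> M <= 1 -> 1/2 <= L -> S * M = 9 * L ->
  0 < s -> s <= 192 * S + 3/2 -> h < M / 32 -> s * h < 1890 * L.
Proof.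
move=> M0 M1 L2 SM s0 sS hM.
have h1 : s * M <= 1731 * L.
  have : s * M <= (192 * S + 3/2) * M by rewrite ler_wpM2r // ltW.
  nra.
have : s * h < s * (M / 32) by rewrite ltr_pM2l.
nra.
Qed.

Lemma numC (R : realType) (M L S n : R) :
  0 < M -> 0 < L -> S * M = 9 * L -> 64 * S <= n ->
  Num.sqrt (M * L / n) <= M / 24.
Proof.
move=> M0 L0 SM nS.
have S0 : 0 < S by nra.
have n0 : 0 < n by nra.
apply: sqrt_le_of; first nra.
rewrite ler_pdivrMr //.
nra.
Qed.

Lemma numD (R : realType) (M L S n h lW : R) :
  0 < M -> 0 < L -> S * M = 9 * L -> 64 * S <= n -> 0 <= h -> h < M / 32 ->
  0 <= lW -> lW <= L ->
  Num.sqrt (2 * h * lW / n) <= M / 96.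
Proof.
move=> M0 L0 SM nS h0 hM l0 lL.
have S0 : 0 < S by nra.
have n0 : 0 < n by nra.
apply: sqrt_le_of; first nra.
rewrite ler_pdivrMr //.
have : h * lW <= M / 32 * L by apply: ler_pM => //; apply: ltW.
nra.
Qed.

Lemma cnt_S (k : nat) (a : nat -> 'I_k) i r : cnt a i r.+1 = (cnt a i r + (a r.+1 == i))%N.
Proof. by rewrite /cnt big_nat_recr. Qed.

Lemma cnt0 (k : nat) (a : nat -> 'I_k) i : cnt a i 0 = 0%N.
Proof. by rewrite /cnt big_geq. Qed.

Lemma cnt_le (k : nat) (a : nat -> 'I_k) i r : (cnt a i r <= r)%N.
Proof.
elim: r => [|r IH]; first by rewrite cnt0.
rewrite cnt_S; case: (a r.+1 == i) => /=; lia.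
Qed.

Lemma cnt_mono (k : nat) (a : nat -> 'I_k) i m d : (cnt a i m <= cnt a i (m + d))%N.
Proof.
elim: d => [|d IH]; first by rewrite addn0.
rewrite addnS cnt_S; lia.
Qed.

Lemma cnt_const (k : nat) (a : nat -> 'I_k) i m d :
  (forall r, (m < r)%N -> (r <= m + d)%N -> a r != i) -> cnt a i (m + d) = cnt a i m.
Proof.
elim: d => [|d IH] h; first by rewrite addn0.
rewrite addnS cnt_S IH; last by move=> r h1 h2; apply: h => //; lia.
by rewrite (negbTE (h _ _ _)) ?addn0 //; lia.
Qed.

Lemma sumY0 (R : realType) (k : nat) (Y : 'I_k -> nat -> R) i : sumY Y i 0 = 0.
Proof. by rewrite /sumY big_geq. Qed.

Lemma sumY_ge0 (R : realType) (k : nat) (Y : 'I_k -> nat -> R) i n :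
  (forall i s, 0 <= Y i s <= 1) -> 0 <= sumY Y i n.
Proof.
move=> hY; rewrite /sumY; apply: sumr_ge0 => s _; by case/andP: (hY i s).
Qed.

Lemma sumY_mono (R : realType) (k : nat) (Y : 'I_k -> nat -> R) i m d :
  (forall i s, 0 <= Y i s <= 1) -> sumY Y i m <= sumY Y i (m + d).
Proof.
move=> hY; elim: d => [|d IH]; first by rewrite addn0.
rewrite addnS.
have -> : sumY Y i (m + d).+1 = sumY Y i (m + d) + Y i (m + d).+1 by rewrite /sumY big_nat_recr.
case/andP: (hY i (m + d).+1) => h0 _; lra.
Qed.

Lemma ln_ge_half (R : realType) (T : nat) : (2 <= T)%N -> 1/2 <= ln (T%:R : R).
Proof.
move=> hT.
have h1 : ln (1 + (-1/2) : R) <= -1/2 by apply: le_ln1Dx; lra.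
have e : (1 + (-1/2) : R) = 2^-1 by field.
rewrite e lnV ?posrE // in h1.
have h2 : ln (2 : R) <= ln (T%:R) by rewrite ler_ln ?posrE ?ler_nat //; rewrite ltr0n; lia.
lra.
Qed.

Lemma Spos (R : realType) (M L S : R) : 0 < M -> 0 < L -> S * M = 9 * L -> 0 < S.
Proof. move=> M0 L0 SM; nra. Qed.

Lemma xT (R : realType) (k S T : R) : 1 <= k -> 0 < S -> 968 * k * S <= T -> 128 * k * S < T.
Proof. move=> k1 S0 h; nra. Qed.

Lemma x0lem (R : realType) (k S : R) : 1 <= k -> 0 < S -> 0 <= 128 * k * S.
Proof. move=> k1 S0; nra. Qed.

Lemma s64lem (R : realType) (k S r s : R) :
  1 <= k -> 0 < S -> 128 * k * S <= r -> r / (2 * k) <= s -> 64 * S <= s.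
Proof.
move=> k1 S0 hr hs; apply: (le_trans _ hs); rewrite ler_pdivlMr; last lra.
have : 64 * S * (2 * k) = 128 * k * S by ring.
lra.
Qed.

Lemma s192lem (R : realType) (k S r s : R) :
  1 <= k -> 0 < S -> r <= 128 * k * S + 1 -> s <= 3 * r / (2 * k) -> s <= 192 * S + 3/2.
Proof.
move=> k1 S0 hr hs; apply: (le_trans hs); rewrite ler_pdivrMr; last lra.
have : (192 * S + 3/2) * (2 * k) = 3 * (128 * k * S) + 3 * k by field.
lra.
Qed.

Lemma exists_r1 (R : realType) (x : R) (T : nat) : 0 <= x -> x < T%:R ->
  exists r1 : nat, [/\ x < r1%:R, r1%:R <= x + 1 & (r1 <= T)%N].
Proof.
move=> x0 xT; exists (Num.truncn x).+1; split.
- exact: truncnS_gt.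
- rewrite -addn1 natrD lerD2r; by case/andP: (truncn_itv x0).
- by rewrite truncn_lt_nat.
Qed.

Lemma pos_of_ge (R : realType) (S s : R) : 0 < S -> 64 * S <= s -> 0 < s.
Proof. move=> S0 h; lra. Qed.

Lemma r0big_lem (R : realType) (k T : nat) (mu : 'I_k -> R) (Y : 'I_k -> nat -> R)
    (U : nat -> 'I_k) (i0 : 'I_k) (r0 : nat) (M L S : R) :
  (forall i, 0 <= mu i <= 1) -> (forall i s, 0 <= Y i s <= 1) ->
  0 < M -> M <= 1 -> (forall i, mu i <= M) -> 1/2 <= L -> S * M = 9 * L ->
  1 <= k%:R :> R -> 968 * k%:R * S <= T%:R ->
  (forall r : nat, 128 * k%:R * S <= r%:R -> (r <= T)%N ->
    forall i : 'I_k, r%:R / (2 * k%:R) <= (cntU U i r)%:R :> R /\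
                     (cntU U i r)%:R <= 3 * r%:R / (2 * k%:R) :> R) ->
  (forall i, M / 64 < mu i -> forall s : nat, (0 < s)%N -> 64 * S <= s%:R -> (s <= T)%N ->
      `|mu i - muhat Y i s| <= 3 * Num.sqrt (mu i * L / s%:R)) ->
  (forall i, mu i <= M / 64 -> forall s : nat, (0 < s)%N -> 64 * S <= s%:R -> (s <= T)%N ->
      muhat Y i s < M / 32) ->
  1890 * L < sumY Y i0 (cntU U i0 r0) ->
  128 * k%:R * S <= r0%:R.
Proof.
move=> hmu hY M0 M1 muM L2 SM kR hT hE1 hE2 hE3 hi.
rewrite leNgt; apply/negP => hlt.
have L0 : 0 < L by apply: lt_le_trans L2; rewrite divr_gt0.
have S0 : 0 < S := Spos M0 L0 SM.
have x0 := x0lem kR S0.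
have [r1 [hr1a hr1b r1T]] := exists_r1 x0 (xT kR S0 hT).
have hr1 := ltW hr1a.
have r01 : (r0 <= r1)%N by rewrite -(ler_nat R); exact: ltW (lt_trans hlt hr1a).
have [hs1 hs2] := hE1 r1 hr1 r1T i0.
have s64 := s64lem kR S0 hr1 hs1.
have s192 := s192lem kR S0 hr1b hs2.
have sR0 := pos_of_ge S0 s64.
have s0 : (0 < cntU U i0 r1)%N by rewrite -(ltr_nat R).
have sT : (cntU U i0 r1 <= T)%N by apply: leq_trans r1T; exact: cnt_le.
have ns : (cntU U i0 r0 <= cntU U i0 r1)%N.
  by rewrite -(subnKC r01); apply: cnt_mono.
have hsum : sumY Y i0 (cntU U i0 r0) <= sumY Y i0 (cntU U i0 r1).
  by rewrite -(subnKC ns); apply: sumY_mono.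
have hmh : sumY Y i0 (cntU U i0 r1) = (cntU U i0 r1)%:R * muhat Y i0 (cntU U i0 r1).
  by rewrite /muhat mulrC divfK // lt0r_neq0.
have key : (cntU U i0 r1)%:R * muhat Y i0 (cntU U i0 r1) < 1890 * L.
  have [hle|hgt] := leP (mu i0) (M / 64).
    apply: (numB (M := M) (S := S)) => //.
    by apply: hE3.
  have := hE2 i0 hgt _ s0 s64 sT.
  set q := Num.sqrt _ => hq.
  case/andP: (hmu i0) => m0 m1.
  apply: (numA (M := M) (m := mu i0) (S := S) (q := q)) => //.
  - exact: sqrtr_ge0.
  - rewrite /q sqr_sqrtr; first by rewrite divfK // lt0r_neq0.
    apply: divr_ge0; [apply: mulr_ge0 => //; exact: ltW | exact: ltW].
  - by move: hq; rewrite ler_norml => /andP [h1 _]; clear -h1; lra.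
have h := lt_le_trans hi hsum.
rewrite hmh in h.
have := lt_trans h key.
by rewrite ltxx.
Qed.

Lemma numE (R : realType) (M g h p q sq : R) :
  0 < M -> 0 <= p -> q <= M / 96 -> `|M - g| <= 3 * sq -> sq <= M / 24 -> h < M / 32 ->
  g + 2 * 3 * p <= h + 2 * 3 * q -> False.
Proof.
move=> M0 p0 qM hg sqM hM hle.
move: hg; rewrite ler_norml => /andP [_ h2].
lra.
Qed.

Lemma lW_bound (R : realType) (L lW : R) : L <= 2 * lW -> 1890 * L <= 420 * 9 * lW.
Proof. move=> h; lra. Qed.

Lemma phase2_lem (R : realType) (k T W : nat) (mu : 'I_k -> R) (Y : 'I_k -> nat -> R)
    (U a : nat -> 'I_k) (j istar : 'I_k) (r0 t' : nat) (M L S : R) :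
  (forall i s, 0 <= Y i s <= 1) ->
  0 < M -> 1/2 <= L -> S * M = 9 * L -> 1 <= k%:R :> R ->
  0 <= ln (W%:R : R) -> ln (W%:R : R) <= L -> (W <= T)%N ->
  mu istar = M -> mu j <= M / 64 ->
  (forall r : nat, 128 * k%:R * S <= r%:R -> (r <= T)%N ->
    forall i : 'I_k, r%:R / (2 * k%:R) <= (cntU U i r)%:R :> R /\
                     (cntU U i r)%:R <= 3 * r%:R / (2 * k%:R) :> R) ->
  (forall i, M / 64 < mu i -> forall s : nat, (0 < s)%N -> 64 * S <= s%:R -> (s <= T)%N ->
      `|mu i - muhat Y i s| <= 3 * Num.sqrt (mu i * L / s%:R)) ->
  (forall i, mu i <= M / 64 -> forall s : nat, (0 < s)%N -> 64 * S <= s%:R -> (s <= T)%N ->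
      muhat Y i s < M / 32) ->
  128 * k%:R * S <= r0%:R -> (r0 <= T)%N -> (t' <= W)%N ->
  cnt a j t'.-1 = cntU U j r0 ->
  (cntU U istar r0 <= cnt a istar t'.-1)%N ->
  ncb Y W a istar t' <= ncb Y W a j t' -> False.
Proof.
move=> hY M0 L2 SM kR lW0 lWL WT Mi hj hE1 hE2 hE3 hr0 r0T htW hcj hci.
have L0 : 0 < L by apply: lt_le_trans L2; rewrite divr_gt0.
have S0 : 0 < S := Spos M0 L0 SM.
have [hj1 _] := hE1 r0 hr0 r0T j.
have [hi1 _] := hE1 r0 hr0 r0T istar.
have m64 := s64lem kR S0 hr0 hj1.
have n64' := s64lem kR S0 hr0 hi1.
have n64 : 64 * S <= (cnt a istar t'.-1)%:R.
  by apply: (le_trans n64'); rewrite ler_nat.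
rewrite -hcj in m64.
have tT : (t'.-1 <= T)%N by apply: leq_trans (leq_pred _) (leq_trans htW WT).
have mT : (cnt a j t'.-1 <= T)%N := leq_trans (cnt_le _ _ _) tT.
have nT : (cnt a istar t'.-1 <= T)%N := leq_trans (cnt_le _ _ _) tT.
have m0 : (0 < cnt a j t'.-1)%N by rewrite -(ltr_nat R); exact: pos_of_ge S0 m64.
have n0 : (0 < cnt a istar t'.-1)%N by rewrite -(ltr_nat R); exact: pos_of_ge S0 n64.
have hgt : M / 64 < mu istar by rewrite Mi; clear -M0; lra.
have hg := hE2 istar hgt _ n0 n64 nT.
rewrite Mi in hg.
have hsq := numC M0 L0 SM n64.
have hb := hE3 j hj _ m0 m64 mT.
have h0 : 0 <= muhat Y j (cnt a j t'.-1).
  by apply: divr_ge0; [exact: sumY_ge0 | exact: ler0n].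
have hq := numD M0 L0 SM m64 h0 hb lW0 lWL.
rewrite /ncb /= /Defs.cst.
apply: (numE M0 _ hq hg hsq hb).
exact: sqrtr_ge0.
Qed.

Theorem lemma10 (R : realType) (k T W : nat)
    (mu : 'I_k -> R) (Y : 'I_k -> nat -> R) (U : nat -> 'I_k) (a : nat -> 'I_k)
    (hmu : forall i, 0 <= mu i <= 1)
    (hmustar : 0 < mustar mu)
    (hY : forall i s, 0 <= Y i s <= 1)
    (hWlo : Num.sqrt (T%:R) <= W%:R :> R) (hWhi : (W <= T)%N)
    (hT : 968 * k%:R * Spar mu T <= T%:R)
    (hexec : is_execution Y U W a)
    (hE : Ev mu T U Y) :
  forall (j : 'I_k) (t : nat), mu j <= mustar mu / 64 ->
    (1 <= t)%N -> (t <= W)%N -> ~ phase1 Y W a t -> a t != j.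
Proof.
move=> j t hj ht1 htW hph.
case: hE => hE1 hE2 hE3.
rewrite /E1 in hE1; rewrite /E2 in hE2; rewrite /E3 in hE3.
have k0 : (0 < k)%N := leq_ltn_trans (leq0n j) (ltn_ord j).
have kR : 1 <= k%:R :> R by rewrite ler1n.
have [istar _ Mi] : {i0 : 'I_k | i0 \in xpredT & mustar mu = mu i0}.
  by apply: (eq_bigmax (x := 0) j xpredT mu) => // i _; case/andP: (hmu i).
have muM : forall i, mu i <= mustar mu by move=> i; exact: (le_bigmax (0 : R) mu i).
have M1 : mustar mu <= 1 by rewrite Mi; case/andP: (hmu istar).
have c2 : Defs.cst R ^+ 2 = 9 :> R by rewrite /Defs.cst; ring.
set M := mustar mu in hmustar hj Mi muM M1 hE2 hE3 hE1 hT.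
set L := ln (T%:R : R).
set S := Spar mu T in hT hE1 hE2 hE3.
have SM : S * M = 9 * L by rewrite /S /Spar -/M c2 -/L; field; exact: lt0r_neq0.
have [t1 [h11 h12 h13]] : exists t', [/\ (1 <= t')%N, (t' <= t)%N & ~ cond1 Y W a t'].
  apply: NNPP => hn; apply: hph => t' h1 h2; apply: NNPP => hc; apply: hn; by exists t'.
pose P := fun n => `[< (1 <= n)%N /\ ~ cond1 Y W a n >].
have exP : exists n, P n by exists t1; apply/asboolP.
case: (ex_minnP exP) => t0 /asboolP [t01 t0c] t0min.
have t0t : (t0 <= t)%N by apply: leq_trans h12; apply: t0min; apply/asboolP.
have c_before : forall t', (1 <= t')%N -> (t' < t0)%N -> cond1 Y W a t'.
  move=> t' h1 h2; apply: NNPP => hc.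
  have : (t0 <= t')%N by apply: t0min; apply/asboolP.
  by rewrite leqNgt h2.
have aU : forall r, (1 <= r)%N -> (r < t0)%N -> a r = U r.
  move=> r h1 h2; apply: (hexec r h1 _).1; first exact: ltnW (leq_trans h2 (leq_trans t0t htW)).
  move=> t'' g1 g2; apply: c_before => //; exact: leq_ltn_trans g2 h2.
have notph : forall t', (t0 <= t')%N -> ~ phase1 Y W a t'.
  by move=> t' h hp; apply: t0c; apply: hp.
have W1 : (1 <= W)%N := leq_trans ht1 htW.
have T1 : (0 < T)%N := leq_trans W1 hWhi.
have lW0 : 0 <= ln (W%:R : R) by apply: ln_ge0; rewrite ler1n.
have t02 : (2 <= t0)%N.
  case: (ltnP 1 t0) => // hle.
  have e : t0 = 1%N by apply/eqP; rewrite eqn_leq hle t01.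
  apply: False_ind; apply: t0c => i; rewrite e /= cnt0 sumY0 c2.
  apply: mulr_ge0 lW0.
  have h420 : (0 : R) <= 420 * 9 by clear; lra.
  exact: h420.
set r0 := t0.-1.
have t0E : t0 = r0.+1 by rewrite /r0 prednK.
have T2 : (2 <= T)%N := leq_trans t02 (leq_trans t0t (leq_trans htW hWhi)).
have L2 : 1/2 <= L := ln_ge_half R T2.
have lWL : ln (W%:R : R) <= L.
  by rewrite /L ler_ln ?posrE ?ler_nat // ltr0n.
have LlW : L <= 2 * ln (W%:R : R).
  have hs : 0 <= Num.sqrt (T%:R : R) by exact: sqrtr_ge0.
  have hW2 : (T%:R : R) <= W%:R ^+ 2.
    have := ler_pM hs hs hWlo hWlo.
    by rewrite -expr2 -expr2 sqr_sqrtr // ler0n.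
  have Tp : (T%:R : R) \is Num.pos by rewrite posrE ltr0n.
  have Wp : (W%:R : R) \is Num.pos by rewrite posrE ltr0n.
  have W2p : (W%:R ^+ 2 : R) \is Num.pos by rewrite posrE exprn_gt0 // ltr0n.
  have := hW2; rewrite -(ler_ln Tp W2p) lnXn; last by rewrite -posrE.
  by rewrite /L mulr_natl.
have cntEq : forall i r, (r <= r0)%N -> cnt a i r = cntU U i r.
  move=> i r hr; rewrite /cnt /cntU; apply: eq_big_nat => r' /andP [g1 g2].
  by rewrite aU //; apply: leq_trans g2 _; rewrite t0E ltnS.

have [i0 hi0] : exists i0, 420 * Defs.cst R ^+ 2 * ln (W%:R) < sumY Y i0 (cnt a i0 r0).
  apply: NNPP => hn; apply: t0c => i; rewrite leNgt; apply/negP => hlt; apply: hn.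
  by exists i; rewrite /r0.
rewrite c2 in hi0.
have r0T : (r0 <= T)%N := leq_trans (leq_pred t0) (leq_trans t0t (leq_trans htW hWhi)).
have hE2' : forall i, M / 64 < mu i -> forall s : nat, (0 < s)%N -> 64 * S <= s%:R -> (s <= T)%N ->
      `|mu i - muhat Y i s| <= 3 * Num.sqrt (mu i * L / s%:R) by exact: hE2.
have hi : 1890 * L < sumY Y i0 (cntU U i0 r0).
  rewrite -cntEq //; apply: le_lt_trans hi0; exact: lW_bound.
have r0big := r0big_lem hmu hY hmustar M1 muM L2 SM kR hT hE1 hE2' hE3 hi.
have main : forall n t', (t' <= n)%N -> (t0 <= t')%N -> (t' <= W)%N -> a t' != j.
  elim=> [|n IH] t' htn ht0 htW'.
    by move: htn; rewrite leqn0 => /eqP e; move: ht0; rewrite e t0E.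
  apply/eqP => hat.
  have ht'1 : (1 <= t')%N := leq_trans t01 ht0.
  have hph2 := (hexec t' ht'1 htW').2 (notph t' ht0) istar.
  rewrite hat in hph2.
  have r0t : (r0 <= t'.-1)%N by move: ht0; rewrite t0E; clear; lia.
  have hcj : cnt a j t'.-1 = cntU U j r0.
    rewrite -cntEq //.
    rewrite -(subnKC r0t); apply: cnt_const => r g1 g2.
    apply: (IH r).
    - by move: g2 htn ht'1 r0t; clear; lia.
    - by rewrite t0E.
    - by move: g2 htW' ht'1 r0t; clear; lia.
  have hci : (cntU U istar r0 <= cnt a istar t'.-1)%N.
    by rewrite -cntEq // -(subnKC r0t); apply: cnt_mono.
  exact: (phase2_lem hY hmustar L2 SM kR lW0 lWL hWhi (esym Mi) hj hE1 hE2' hE3 r0big r0T htW' hcj hci hph2).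
exact: (main t t (leqnn t) t0t htW).
Qed.
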